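(* Let $G$ be an abelian group and $K=G\oplus G$. Then every uniformly fully inert subgroup of $K$ is commensurable with some fully invariant subgroup of $K$.
   Context: All groups are additively written abelian groups. A subgroup $F$ of $K$ is fully invariant if $\phi(F)\subseteq F$ for every endomorphism $\phi$ of $K$. A subgroup $S$ of $K$ is uniformly fully inert if there is a fixed positive integer $m$ such that $(\phi(S)+S)/S$ has at most $m$ elements for every endomorphism $\phi$ of $K$. Subgroups $B,C$ are commensurable if both $(B+C)/B$ and $(B+C)/C$ are finite. *)

(* Defs.v *)
From mathcomp Require Import all_boot all_order all_algebra.
Set Implicit Arguments. Unset Strict Implicit. Unset Printing Implicit Defensive.
Import GRing.Theory.
Local Open Scope ring_scope.

Section AbGroups.
Variable K : zmodType.

Definition is_subgroup (S : K -> Prop) : Prop :=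
  S 0 /\ (forall x y, S x -> S y -> S (x - y)).

Definition is_endo (phi : K -> K) : Prop :=
  forall x y, phi (x + y) = phi x + phi y.

Definition subg_sum (B C : K -> Prop) : K -> Prop :=
  fun x => exists b c, B b /\ C c /\ x = b + c.

Definition subg_image (phi : K -> K) (S : K -> Prop) : K -> Prop :=
  fun x => exists s, S s /\ x = phi s.

(* the quotient A/B (B a subgroup contained in A) has at most m elements:
   there are at most m elements of A whose cosets mod B cover A. *)
Definition quot_card_le (A B : K -> Prop) (m : nat) : Prop :=
  exists r : seq K, (size r <= m)%N /\ (forall y, y \in r -> A y) /\
    forall x, A x -> exists2 y, y \in r & B (x - y).

Definition quot_finite (A B : K -> Prop) : Prop :=
  exists m : nat, quot_card_le A B m.

Definition fully_invariant (F : K -> Prop) : Prop :=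
  is_subgroup F /\ forall phi, is_endo phi -> forall x, F x -> F (phi x).

Definition uniformly_fully_inert (S : K -> Prop) : Prop :=
  is_subgroup S /\ exists m : nat, (0 < m)%N /\
    forall phi, is_endo phi -> quot_card_le (subg_sum (subg_image phi S) S) S m.

Definition commensurable (B C : K -> Prop) : Prop :=
  quot_finite (subg_sum B C) B /\ quot_finite (subg_sum B C) C.

End AbGroups.

(* Main.v *)
Require Import Defs.
From mathcomp Require Import all_boot all_order all_algebra zify.
From Stdlib Require Import Classical ClassicalEpsilon.
Set Implicit Arguments. Unset Strict Implicit. Unset Printing Implicit Defensive.
Import GRing.Theory.
Local Open Scope ring_scope.

Definition pb (P : Prop) : bool := if excluded_middle_informative P then true else false.
Lemma pbP (P : Prop) : reflect P (pb P).
Proof. by rewrite /pb; case: excluded_middle_informative => h; constructor. Qed.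

Section Gen.
Variable K : zmodType.

Lemma endo0 (f : K -> K) : is_endo f -> f 0 = 0.
Proof. by move=> H; apply/(addIr (f 0)); rewrite -H !add0r. Qed.
Lemma endoN (f : K -> K) : is_endo f -> forall x, f (- x) = - f x.
Proof. by move=> H x; apply/eqP; rewrite -addr_eq0 -H addNr endo0. Qed.
Lemma endoB (f : K -> K) : is_endo f -> forall x y, f (x - y) = f x - f y.
Proof. by move=> H x y; rewrite H endoN. Qed.
Lemma endo_id : is_endo (fun x : K => x). Proof. by []. Qed.
Lemma endo_zero : is_endo (fun _ : K => 0). Proof. by move=> x y; rewrite addr0. Qed.
Lemma endo_add (f g : K -> K) : is_endo f -> is_endo g -> is_endo (fun x => f x + g x).
Proof. by move=> Hf Hg x y; rewrite Hf Hg addrACA. Qed.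
Lemma endo_sub (f g : K -> K) : is_endo f -> is_endo g -> is_endo (fun x => f x - g x).
Proof. by move=> Hf Hg x y; rewrite Hf Hg opprD addrACA. Qed.
Lemma endo_comp (f g : K -> K) : is_endo f -> is_endo g -> is_endo (fun x => f (g x)).
Proof. by move=> Hf Hg x y; rewrite Hg Hf. Qed.

Section Sub.
Variable B : K -> Prop.
Hypothesis HB : is_subgroup B.
Lemma sg0 : B 0. Proof. by case: HB. Qed.
Lemma sgB x y : B x -> B y -> B (x - y). Proof. by case: HB => _; apply. Qed.
Lemma sgN x : B x -> B (- x). Proof. by move=> h; rewrite -sub0r; apply: sgB => //; apply: sg0. Qed.
Lemma sgD x y : B x -> B y -> B (x + y).
Proof. by move=> hx hy; rewrite -[y]opprK; apply: sgB => //; apply: sgN. Qed.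
End Sub.

Lemma aux (a b c e : K) : b - (e - c) = (a + b - e) - (a - c).
Proof. by rewrite opprB [in RHS]opprB addrAC [a + b]addrC -[b + a + _]addrA [a + _]addrC subrK addrA. Qed.
Lemma aux2 (a b c : K) : a + b - c = a - (c - b).
Proof. by rewrite opprB addrA addrAC. Qed.

Lemma aux3 (a b c e : K) : (a - b) - (c - e) = (a - c) - (b - e).
Proof. by rewrite !opprB addrAC [in RHS]addrAC -!addrA [- b + _]addrC [- c + _]addrC. Qed.
Lemma aux4 (x g r s : K) : x - (r + s) = (x - g - r) + (g - s).
Proof. by rewrite [in RHS]addrA [x - g - r + g]addrAC subrK opprD addrA. Qed.

Fixpoint incong (B : K -> Prop) (l : seq K) : Prop :=
  match l with [::] => True | x :: l' => (forall y, y \in l' -> ~ B (x - y)) /\ incong B l' end.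

Lemma pigeon (B : K -> Prop) (HB : is_subgroup B) l R :
  incong B l -> (forall x, x \in l -> exists2 r, r \in R & B (x - r)) -> (size l <= size R)%N.
Proof.
elim: l R => [|x l IH] R //= [Hx Hl] Hcov.
have [r rR Bxr] := Hcov x (mem_head _ _).
have HR : (size (rem r R)).+1 = size R.
  by rewrite size_rem //; case: R rR {Hcov}.
rewrite -HR ltnS; apply: IH => // y yl.
have /Hcov [r' r'R Byr'] : y \in x :: l by rewrite inE yl orbT.
exists r' => //; apply: rem_mem => //; apply/eqP => er; subst r'.
apply: (Hx y yl); have -> : x - y = (x - r) - (y - r) by rewrite opprB addrA subrK.
exact: sgB.
Qed.


Lemma cover_to_quot (B : K -> Prop) (HB : is_subgroup B) R : forall A : K -> Prop,
  (forall x, A x -> exists2 r, r \in R & B (x - r)) -> quot_card_le A B (size R).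
Proof.
elim: R => [|r R IH] A Hcov.
  by exists [::]; split => //.
have := IH (fun x => A x /\ ~ B (x - r)).
case=> [x [Ax nB]|L [sL [AL cL]]].
  have [r' r'in Br'] := Hcov x Ax.
  move: r'in; rewrite inE => /orP [/eqP e|r'in]; first by subst r'.
  by exists r'.
case: (classic (exists a, A a /\ B (a - r))) => [[a [Aa Ba]]|na].
  exists (a :: L); split => //=.
  split => [y|x Ax].
    by rewrite inE => /orP [/eqP ->|/AL []].
  case: (classic (B (x - r))) => Bx.
    exists a; first exact: mem_head.
    have -> : x - a = (x - r) - (a - r) by rewrite opprB addrA subrK.
    exact: sgB.
  have [y yL By] := cL x (conj Ax Bx).
  by exists y => //; rewrite inE yL orbT.
exists L; split => //=; first exact: leqW.
split => [y /AL []//|x Ax].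
case: (classic (B (x - r))) => Bx; first by exfalso; apply: na; exists x.
exact: cL.
Qed.

Lemma bound_to_cover (A B : K -> Prop) n :
  (forall l, (forall x, x \in l -> A x) -> incong B l -> (size l <= n)%N) ->
  quot_card_le A B n.
Proof.
move=> Hb; apply: NNPP => nq.
suff: forall k, exists l, [/\ (forall x, x \in l -> A x), incong B l & size l = k].
  by move=> /(_ n.+1) [l [Al il sl]]; have := Hb l Al il; rewrite sl ltnn.
elim=> [|k [l [Al il sl]]]; first by exists [::].
have sk : (k <= n)%N by rewrite -sl; apply: Hb.
have [x [Ax Hx]] : exists x, A x /\ forall y, y \in l -> ~ B (x - y).
  apply: NNPP => nx; apply: nq; exists l; split; first by rewrite sl.
  split => // x Ax; apply: NNPP => ny; apply: nx; exists x; split => // y yl By.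
  by apply: ny; exists y.
exists (x :: l); split => //=; last by rewrite sl.
by move=> y; rewrite inE => /orP [/eqP ->|/Al].
Qed.

Definition goodU (U : (K -> K) -> Prop) :=
  (forall a b c, is_endo a -> is_endo b -> (forall x, c x = a x - b x) -> U a -> U b -> U c)
  /\ exists2 f, is_endo f & ~ U f.

Fixpoint allP (T : Type) (p : T -> Prop) (s : seq T) : Prop :=
  if s is x :: s' then p x /\ allP p s' else True.

Fixpoint cntA (f : K -> K) (Us : seq ((K -> K) -> Prop)) : nat :=
  if Us is U :: Us' then ((~~ pb (U f)) + cntA f Us')%N else 0%N.

Fixpoint filtIn (f : K -> K) (Us : seq ((K -> K) -> Prop)) :=
  if Us is U :: Us' then (if pb (U f) then U :: filtIn f Us' else filtIn f Us') else [::].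

Fixpoint Tb (r : nat) : nat := if r is r'.+1 then (Tb r' + r'.+1)%N else 0%N.

Lemma size_filtIn f Us : (size (filtIn f Us) + cntA f Us)%N = size Us.
Proof.
elim: Us => [|U Us IH] //=; case: (pbP (U f)) => h /=; lia.
Qed.

Lemma allP_filtIn (p : ((K -> K) -> Prop) -> Prop) f Us : allP p Us -> allP p (filtIn f Us).
Proof.
elim: Us => [|U Us IH] //= [pU pUs]; case: (pbP (U f)) => _ /=; last exact: IH.
by split => //; apply: IH.
Qed.

Lemma cnt_filtIn g f Us : (cntA g (filtIn f Us) <= cntA g Us)%N.
Proof.
elim: Us => [|U Us IH] //=; case: (pbP (U f)) => _ /=; first by rewrite leq_add2l.
exact: leq_trans IH (leq_addl _ _).
Qed.

Lemma cnt_mono f g Us : allP (fun U => ~ U f -> ~ U g) Us -> (cntA f Us <= cntA g Us)%N.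
Proof.
elim: Us => [|U Us IH] //= [h hs]; apply: leq_add; last exact: IH.
by case: (pbP (U f)) => hf; case: (pbP (U g)) => hg //=; exfalso; apply: h.
Qed.

Lemma allP_in f Us : allP (fun U => U f) (filtIn f Us).
Proof. by elim: Us => [|U Us IH] //=; case: (pbP (U f)) => //= h. Qed.

Lemma allP_and (T : Type) (p q : T -> Prop) Us : allP p Us -> allP q Us -> allP (fun U => p U /\ q U) Us.
Proof. by elim: Us => [|U Us IH] //= [? ?] [? ?]; split => //; apply: IH. Qed.

Lemma allP_impl (T : Type) (p q : T -> Prop) Us : (forall U, p U -> q U) -> allP p Us -> allP q Us.
Proof. by move=> H; elim: Us => [|U Us IH] //= [? ?]; split; [apply: H | apply: IH]. Qed.

Lemma avoid r : forall Us, allP goodU Us -> (Tb r <= size Us)%N ->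
  exists2 f, is_endo f & (r <= cntA f Us)%N.
Proof.
elim: r => [|r IH] Us gU sz; first by exists (fun x => x) => //; exact: endo_id.
case: Us gU sz => [|U1 rest] /=; first by move=> _; rewrite addnS.
move=> [[Hs1 [f1 ef1 nf1]] grest] sz.
have c1 : (~~ pb (U1 f1)) = true by apply/negP => /pbP.
case: (leqP r (cntA f1 rest)) => h.
  by exists f1 => //; rewrite c1 add1n.
have szI : (Tb r <= size (filtIn f1 rest))%N.
  have := size_filtIn f1 rest; lia.
have [f' ef' cf'] := IH _ (allP_filtIn _ grest) szI.
case: (classic (U1 f')) => u1.
  exists (fun x => f' x + f1 x); first exact: endo_add.
  have -> : (~~ pb (U1 (fun x => f' x + f1 x))) = true.
    apply/negP => /pbP hh; apply: nf1; apply: (Hs1 _ f') hh u1 => //; first exact: endo_add.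
    by move=> x; rewrite addrC addKr.
  rewrite add1n ltnS; apply: leq_trans (cnt_filtIn _ f1 _); apply: leq_trans cf' _.
  apply: cnt_mono; apply: allP_impl (allP_and (allP_filtIn f1 grest) (allP_in f1 rest)).
  move=> U [[HsU _] Uf1] nU hU; apply: nU; apply: (HsU _ f1) hU Uf1 => //; first exact: endo_add.
  by move=> x; rewrite addrK.
exists f' => //.
have -> : (~~ pb (U1 f')) = true by apply/negP => /pbP.
by rewrite add1n ltnS; apply: leq_trans cf' (cnt_filtIn _ f1 _).
Qed.

Section Fin.
Variable S : K -> Prop.
Hypothesis HS : is_subgroup S.

Definition finimg (d : K) := exists R : seq K,
  forall f, is_endo f -> exists2 r, r \in R & S (f d - r).

Lemma lemmaN (ps : seq (K * seq K)) :
  (forall f, is_endo f -> exists2 p, p \in ps & exists2 c, c \in p.2 & S (f p.1 - c)) ->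
  exists2 p, p \in ps & finimg p.1.
Proof.
have [n] := ubnP (size ps); elim: n ps => // n IHn [|[d F] ps] Hsz H; first by have [] := H _ endo_id.
case: (classic (finimg d)) => [fd|nfd]; first by exists (d, F); rewrite ?mem_head.
have [psi epsi Hpsi] : exists2 psi, is_endo psi &
    forall x, x \in [seq a - b | a <- F, b <- F] -> ~ S (psi d - x).
  apply: NNPP => hn; apply: nfd; exists [seq a - b | a <- F, b <- F] => f ef.
  apply: NNPP => hn2; apply: hn; exists f => // x xin Sx; apply: hn2; by exists x.
have : exists2 p, p \in [seq (q.1, q.2 ++ [seq c - psi q.1 | c <- q.2]) | q <- ps] & finimg p.1.
  apply: IHn; first by rewrite size_map.
  move=> f ef.
  have [p pin [c cin Sc]] := H f ef.
  move: pin; rewrite inE => /orP [/eqP ep | pin]; last first.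
    exists (p.1, p.2 ++ [seq c - psi p.1 | c <- p.2]); first exact: (map_f (fun q : K * seq K => (q.1, q.2 ++ [seq c - psi q.1 | c <- q.2]))).
    by exists c => //=; rewrite mem_cat cin.
  subst p; simpl in cin, Sc.
  have [p2 p2in [c2 c2in Sc2]] := H _ (endo_add ef epsi).
  move: p2in; rewrite inE => /orP [/eqP ep2 | p2in].
    subst p2; simpl in c2in, Sc2; exfalso.
    apply: (Hpsi (c2 - c)); first exact: allpairs_f.
    rewrite (aux (f d)); exact: sgB.
  exists (p2.1, p2.2 ++ [seq c - psi p2.1 | c <- p2.2]); first exact: (map_f (fun q : K * seq K => (q.1, q.2 ++ [seq c - psi q.1 | c <- q.2]))).
  exists (c2 - psi p2.1) => /=; first by rewrite mem_cat (map_f (fun c => c - psi p2.1)) ?orbT.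
  by rewrite -aux2.
case=> p' /mapP [q qin ->] /= fq.
by exists q => //; rewrite inE qin orbT.
Qed.


Definition Gd d := S d /\ finimg d.

Lemma G_sub : is_subgroup Gd.
Proof.
split.
  split; first exact: sg0.
  exists [:: 0] => f ef; exists 0; first exact: mem_head.
  by rewrite endo0 // subr0; apply: sg0.
move=> x y [Sx [Rx Hx]] [Sy [Ry Hy]]; split; first exact: sgB.
exists [seq a - b | a <- Rx, b <- Ry] => f ef.
have [a aR Sa] := Hx f ef; have [b bR Sb] := Hy f ef.
exists (a - b); first exact: allpairs_f.
by rewrite endoB // aux3; apply: sgB.
Qed.

Fixpoint pairsOf (l : seq K) : seq K :=
  if l is x :: l' then [seq x - y | y <- l'] ++ pairsOf l' else [::].

Lemma pairs_incong_map f l : is_endo f ->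
  (forall d, d \in pairsOf l -> ~ S (f d)) -> incong S (map f l).
Proof.
move=> ef; elim: l => [|x l IH] //= H; split; last first.
  by apply: IH => d dl; apply: (H d); rewrite mem_cat dl orbT.
move=> y' /mapP [y yl ->]; rewrite -endoB //; apply: (H (x - y)).
by rewrite mem_cat (map_f (fun y => x - y)).
Qed.

Lemma incong_pairs (B : K -> Prop) l : incong B l -> forall d, d \in pairsOf l -> ~ B d.
Proof.
elim: l => [|x l IH] //= [Hx Hl] d; rewrite mem_cat => /orP [/mapP [y yl ->]|dl].
  exact: Hx.
exact: IH.
Qed.

Lemma pairs_S l : (forall x, x \in l -> S x) -> forall d, d \in pairsOf l -> S d.
Proof.
elim: l => [|x l IH] //= H d; rewrite mem_cat => /orP [/mapP [y yl ->]|dl].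
  by apply: (sgB HS); [apply: (H x) | apply: (H y)]; rewrite inE ?eqxx ?yl ?orbT.
by apply: IH => // y yl; apply: (H y); rewrite inE yl orbT.
Qed.

Variable m : nat.
Hypothesis Hm : forall f, is_endo f -> forall l,
  (forall x, x \in l -> exists2 s, S s & x = f s) -> incong S l -> (size l <= m)%N.

Lemma step1 l : (forall x, x \in l -> S x) -> incong Gd l -> (size l <= m)%N.
Proof.
move=> lS lG; case: (leqP (size l) m) => // big; exfalso.
have : exists2 p, p \in [seq (d, [:: (0:K)]) | d <- pairsOf l] & finimg p.1.
  apply: lemmaN => f ef; apply: NNPP => hn.
  have : incong S (map f l).
    apply: pairs_incong_map => // d dp Sd; apply: hn.
    exists (d, [:: 0]); first exact: (map_f (fun d => (d, [:: 0]))).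
    by exists 0; rewrite ?mem_head // subr0.
  move/(Hm ef); rewrite size_map => h.
  suff: (size l <= m)%N by rewrite leqNgt big.
  apply: h => x /mapP [y yl ->]; exists y => //; exact: lS.
case=> p /mapP [d dp ->] /= fd.
by apply: (incong_pairs lG dp); split => //; exact: pairs_S dp.
Qed.

Lemma S_over_G : quot_card_le S Gd m.
Proof. by apply: bound_to_cover => l; apply: step1. Qed.

Fixpoint PP (ds : seq K) : K -> Prop :=
  if ds is d :: ds' then fun x => exists2 g, is_endo g & PP ds' (x - g d) else S.

Lemma PP_S ds x : S x -> PP ds x.
Proof.
elim: ds x => [|d ds IH] x Sx //=; exists (fun _ => 0); first exact: endo_zero.
by rewrite subr0; apply: IH.
Qed.

Lemma PP_sub ds : is_subgroup (PP ds).
Proof.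
elim: ds => [|d ds IH] //=; split.
  by exists (fun _ => 0); [exact: endo_zero | rewrite subr0; apply: PP_S; apply: sg0].
move=> x y [g1 e1 h1] [g2 e2 h2]; exists (fun x => g1 x - g2 x); first exact: endo_sub.
by rewrite aux3; apply: (sgB IH).
Qed.

Lemma PP_cons d ds x : PP ds x -> PP (d :: ds) x.
Proof. by move=> h; exists (fun _ => 0); [exact: endo_zero | rewrite subr0]. Qed.

Lemma PP_head d ds f : is_endo f -> PP (d :: ds) (f d).
Proof. by move=> ef; exists f => //; rewrite subrr; apply: (sg0 (PP_sub ds)). Qed.

Fixpoint chain (ds : seq K) : Prop :=
  if ds is d :: ds' then [/\ chain ds', Gd d & exists2 f, is_endo f & ~ PP ds' (f d)]
  else True.

Fixpoint Us (ds : seq K) : seq ((K -> K) -> Prop) :=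
  if ds is d :: ds' then (fun f => PP ds' (f d)) :: Us ds' else [::].

Lemma size_Us ds : size (Us ds) = size ds.
Proof. by elim: ds => [|d ds IH] //=; rewrite IH. Qed.

Lemma good_Us ds : chain ds -> allP goodU (Us ds).
Proof.
elim: ds => [|d ds IH] //= [cds [Sd _] [f ef nf]]; split; last exact: IH.
split; last by exists f.
by move=> a b c ea eb hc ha hb; rewrite hc; apply: (sgB (PP_sub ds)).
Qed.

Lemma chain_list ds f : chain ds -> is_endo f ->
  exists l, [/\ size l = (cntA f (Us ds)).+1, incong S l,
    forall x, x \in l -> PP ds x & forall x, x \in l -> exists2 s, S s & x = f s].
Proof.
move=> + ef; elim: ds => [|d ds IH] /=.
  move=> _; exists [:: 0]; split => // x; rewrite inE => /eqP ->.
    exact: sg0.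
  by exists 0; [apply: sg0 | rewrite endo0].
move=> [cds [Sd _] _]; have [l [sl il Pl fl]] := IH cds.
case: (pbP (PP ds (f d))) => h /=.
  exists l; split => // x xl; apply: PP_cons; exact: Pl.
exists (f d :: l); split => /=; first by rewrite sl.
- split => // y yl Sy; apply: h.
  have -> : f d = (f d - y) + y by rewrite subrK.
  by apply: (sgD (PP_sub ds)); [apply: PP_S | apply: Pl].
- move=> x; rewrite inE => /orP [/eqP ->|xl]; first exact: PP_head.
  by apply: PP_cons; apply: Pl.
- move=> x; rewrite inE => /orP [/eqP ->|xl]; first by exists d.
  exact: fl.
Qed.

Lemma maxchain : exists ds, chain ds /\ forall d, Gd d -> forall f, is_endo f -> PP ds (f d).
Proof.
apply: NNPP => hn.
have ext : forall ds, chain ds -> exists d, chain (d :: ds).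
  move=> ds cds; apply: NNPP => hd; apply: hn; exists ds; split => // d Gd_d f ef.
  apply: NNPP => nP; apply: hd; exists d; split => //; by exists f.
have : forall n, exists ds, chain ds /\ size ds = n.
  elim=> [|n [ds [cds sds]]]; first by exists [::].
  have [d cd] := ext ds cds; exists (d :: ds); split => //=; by rewrite sds.
move=> /(_ (Tb m)) [ds [cds sds]].
have sz : (Tb m <= size (Us ds))%N by rewrite size_Us sds.
have [f ef cf] := avoid (good_Us cds) sz.
have [l [sl il _ fl]] := chain_list cds ef.
have := Hm ef fl il; rewrite sl; lia.
Qed.

Lemma PP_fin ds : chain ds -> exists R : seq K, forall x, PP ds x -> exists2 r, r \in R & S (x - r).
Proof.
elim: ds => [|d ds IH] /=.
  by move=> _; exists [:: 0] => x Sx; exists 0; rewrite ?mem_head ?subr0.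
move=> [cds [Sd [Rd Hd]] _]; have [R HR] := IH cds.
exists [seq a + b | a <- R, b <- Rd] => x [g eg hx].
have [a aR Sa] := HR _ hx; have [b bR Sb] := Hd g eg.
exists (a + b); first exact: allpairs_f.
by rewrite (aux4 x (g d)); apply: sgD.
Qed.

End Fin.
End Gen.

Theorem general (K : zmodType) (S : K -> Prop) :
  uniformly_fully_inert S -> exists F : K -> Prop, fully_invariant F /\ commensurable S F.
Proof.
case=> HS [m [_ Hq]].
have Hm : forall f, is_endo f -> forall l,
    (forall x, x \in l -> exists2 s, S s & x = f s) -> incong S l -> (size l <= m)%N.
  move=> f ef l lf il; have [R [sR [AR cR]]] := Hq f ef.
  apply: leq_trans sR; apply: (pigeon HS il) => x xl.
  have [s Ss ->] := lf x xl; apply: cR.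
  exists (f s), 0; split; [by exists s | split; [exact: sg0 | by rewrite addr0]].
have [ds [cds HG]] := maxchain HS Hm.
pose F := fun x => forall f, is_endo f -> PP S ds (f x).
have PPs := PP_sub HS ds.
have F0 : F 0 by move=> f ef; rewrite endo0 //; apply: (sg0 PPs).
have FD : forall x y, F x -> F y -> F (x + y).
  by move=> x y Fx Fy f ef; rewrite ef; apply: (sgD PPs); [apply: Fx | apply: Fy].
exists F; split.
  split; first split => //.
    by move=> x y Fx Fy f ef; rewrite endoB //; apply: (sgB PPs); [apply: Fx | apply: Fy].
  by move=> g eg x Fx f ef; apply: (Fx (fun y => f (g y))); exact: endo_comp.
split.
  have [R HR] := PP_fin HS cds; exists (size R); apply: cover_to_quot => //.
  move=> x [b [c [Sb [Fc ->]]]]; apply: HR.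
  by apply: (sgD PPs); [apply: PP_S | apply: (Fc _ (@endo_id K))].
have [R [sR [RS cR]]] := S_over_G HS Hm.
exists m, R; split => //; split.
  by move=> y yR; exists y, 0; split; [exact: RS | split; [exact: F0 | rewrite addr0]].
move=> x [b [c [Sb [Fc ->]]]]; have [r rR Gr] := cR b Sb; exists r => //.
have -> : b + c - r = (b - r) + c by rewrite addrAC.
by apply: FD => //; move=> f ef; apply: HG.
Qed.

Theorem proposition2p2 (G : zmodType) (S : (G * G)%type -> Prop) :
  uniformly_fully_inert S ->
  exists F : (G * G)%type -> Prop, fully_invariant F /\ commensurable S F.
Proof. exact: general. Qed.
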